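(* For $n>2$ and $1<k<n$, the graph $G=H_B(n,k)$ has diameter $\mathrm{diam}(G)=4$ and radius $\mathrm{rad}(G)=2$.
   Context: Fix integers $n\ge 2$ and $1\le k<n$ and positive real numbers $x_1<x_2<\dots<x_n$. Let $\mathscr{B}_n=\{\pm x_1,\pm x_2,\dots,\pm x_{n-1},x_n\}$ (so $-x_n\notin\mathscr{B}_n$). Let $\phi(\mathscr{B}_n)$ be the family of all nonempty subsets $S\subseteq\mathscr{B}_n$ whose elements have pairwise distinct absolute values and whose element of largest absolute value is positive. Let $\mathscr{B}_n^+=\{x_1,\dots,x_n\}$, let $V_1$ be the set of all $k$-element subsets of $\mathscr{B}_n^+$, and let $V_2=\phi(\mathscr{B}_n)\setminus V_1$. For $A\in\phi(\mathscr{B}_n)$ put $A^\dagger=\{|a|:a\in A\}$. The bipartite Kneser B type-$k$ graph $H_B(n,k)$ is the simple graph with vertex set $V_1\cup V_2$ in which $X\in V_1$ and $Y\in V_2$ are adjacent if and only if $X\subseteq Y^\dagger$ or $Y^\dagger\subseteq X$, and there are no other edges. *)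

(* Defs.v *)
From mathcomp Require Import all_boot.
Set Implicit Arguments. Unset Strict Implicit. Unset Printing Implicit Defensive.

Section Graph.
Variables (T : finType) (V : {set T}) (e : rel T).

Fixpoint ball (x : T) (d : nat) : {set T} :=
  match d with
  | 0 => [set x]
  | d'.+1 => ball x d' :|: [set y in V | [exists z in ball x d', e z y]]
  end.

Definition gconnected : Prop :=
  forall x y, x \in V -> y \in V -> exists d, y \in ball x d.

(* graph distance (correct when y is reachable from x; walks of length
   < #|V| suffice) *)
Definition gdist (x y : T) : nat := find (fun d => y \in ball x d) (iota 0 #|V|).

Definition ecc (x : T) : nat := \max_(y in V) gdist x y.
Definition diam : nat := \max_(x in V) ecc x.
Definition rad : nat := \big[minn/#|V|]_(x in V) ecc x.
End Graph.

(* The element (i, true) encodes +x_{i+1}, (i, false) encodes -x_{i+1},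
   for i : 'I_n (0-based indices).  Since 0 < x_1 < ... < x_n, the absolute
   value |±x_{i+1}| = x_{i+1} is encoded by i, and comparison of absolute
   values is comparison of indices. *)
Definition elt (n : nat) := ('I_n * bool)%type.

(* membership in B_n = {±x_1,...,±x_{n-1}, x_n} *)
Definition inB n (a : elt n) : bool := a.2 || (val a.1 != n.-1).

Definition absv n (S : {set elt n}) : {set 'I_n} := [set a.1 | a in S].

Definition phiB n (S : {set elt n}) : bool :=
  [&& S != set0,
      [forall a in S, inB a],
      [forall a in S, forall b in S, (a.1 == b.1) ==> (a == b)] &
      [forall a in S, [forall b in S, b.1 <= a.1] ==> a.2]].

Definition V1 n k (S : {set elt n}) : bool := [forall a in S, a.2] && (#|S| == k).
Definition V2 n k (S : {set elt n}) : bool := phiB S && ~~ V1 k S.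

Definition HBvert n k : {set {set elt n}} := [set S | V1 k S || V2 k S].

Definition HBadj n k : rel {set elt n} := fun X Y =>
  (V1 k X && V2 k Y && ((absv X \subset absv Y) || (absv Y \subset absv X))) ||
  (V1 k Y && V2 k X && ((absv Y \subset absv X) || (absv X \subset absv Y))).

(* Main.v *)
Require Import Defs.
From mathcomp Require Import all_boot zify.
Set Implicit Arguments. Unset Strict Implicit. Unset Printing Implicit Defensive.

Definition mkS n (P : pred 'I_n) (s : 'I_n -> bool) : {set elt n} :=
  [set a : elt n | P a.1 && (a.2 == s a.1)].

Lemma phiB_mk n (P : pred 'I_n) (s : 'I_n -> bool) (m : 'I_n) :
  P m -> s m -> (forall i, P i -> i <= m) -> (forall i, P i -> val i = n.-1 -> s i) ->
  phiB (mkS P s).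
Proof.
move=> Pm sm Hle Hl; rewrite /phiB; apply/and4P; split.
- by apply/set0Pn; exists (m, s m); rewrite inE /= Pm eqxx.
- apply/forall_inP => -[i b]; rewrite inE /= => /andP[Pi /eqP ->].
  rewrite /inB /=; case: (val i =P n.-1) => h; first by rewrite Hl.
  by apply/orP; right; apply/eqP.
- apply/forall_inP => -[i b]; rewrite inE /= => /andP[_ /eqP ->].
  apply/forall_inP => -[j c]; rewrite inE /= => /andP[_ /eqP ->].
  by apply/implyP => /eqP ->.
- apply/forall_inP => -[i b]; rewrite inE /= => /andP[Pi /eqP ->].
  apply/implyP => /forall_inP H.
  have := H (m, s m); rewrite inE /= Pm eqxx => /(_ isT) hmi.
  have -> : i = m by apply/val_inj/eqP; rewrite eqn_leq hmi Hle.
  done.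
Qed.

Lemma absv_mk n (P : pred 'I_n) (s : 'I_n -> bool) : absv (mkS P s) = [set i | P i].
Proof.
apply/setP => i; rewrite inE; apply/imsetP/idP => [[a] | Pi].
- by rewrite inE => /andP[Pa _] ->.
- by exists (i, s i) => //; rewrite inE Pi eqxx.
Qed.

Definition mkV1 n (B : {set 'I_n}) : {set elt n} := [set (i, true) | i in B].

Lemma absv_mkV1 n (B : {set 'I_n}) : absv (mkV1 B) = B.
Proof.
apply/setP => i; apply/imsetP/idP => [[a /imsetP[j jB ->] ->] // | iB].
by exists (i, true) => //; apply/imsetP; exists i.
Qed.

Lemma V1_mkV1 n k (B : {set 'I_n}) : #|B| = k -> V1 k (mkV1 B).
Proof.
move=> hB; rewrite /V1; apply/andP; split.
- by apply/forall_inP => a /imsetP[i _ ->].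
- by rewrite card_imset ?hB // => i j [].
Qed.

Lemma card_absv n k (X : {set elt n}) : V1 k X -> #|absv X| = k.
Proof.
case/andP => /forall_inP H /eqP <-; rewrite /absv card_in_imset //.
move=> [i x] [j y] /H /= -> /H /= -> /= ->; done.
Qed.

Lemma exists_sub (T : finType) (A : {set T}) m :
  m <= #|A| -> exists B : {set T}, (B \subset A) && (#|B| == m).
Proof.
move=> hm; exists [set x in take m (enum A)]; apply/andP; split.
- by apply/subsetP => x; rewrite inE => /mem_take; rewrite mem_enum.
- rewrite cardsE; apply/eqP; move/card_uniqP: (take_uniq m (enum_uniq (mem A))) => ->.
  by rewrite size_takel // -cardE.
Qed.

Lemma exists_k (T : finType) (A : {set T}) m :
  m <= #|T| -> exists B : {set T}, (#|B| == m) && ((B \subset A) || (A \subset B)).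
Proof.
move=> hm; case: (leqP m #|A|) => hA.
- by case: (exists_sub hA) => B /andP[h1 h2]; exists B; rewrite h2 h1.
- have : #|T| - m <= #|~: A| by rewrite cardsCs setCK; lia.
  case/exists_sub => D /andP[h1 /eqP h2]; exists (~: D); apply/andP; split.
  + by rewrite cardsCs setCK h2; apply/eqP; lia.
  + by apply/orP; right; rewrite subsetC.
Qed.

Lemma ballS (T : finType) (V : {set T}) (e : rel T) x d y :
  (y \in ball V e x d.+1) = (y \in ball V e x d) || ((y \in V) && [exists z in ball V e x d, e z y]).
Proof. by rewrite /= in_setU in_set. Qed.

Lemma ball_refl (T : finType) (V : {set T}) (e : rel T) x d : x \in ball V e x d.
Proof. elim: d => [|d IH]; first by rewrite /= set11. by rewrite ballS IH. Qed.

Lemma ball_mono (T : finType) (V : {set T}) (e : rel T) x d d' :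
  d <= d' -> {subset ball V e x d <= ball V e x d'}.
Proof.
move=> /subnK <-; elim: (d' - d) => [|m IH] y Hy; first by rewrite add0n.
by rewrite addSn ballS (IH y Hy).
Qed.

Lemma ball_step (T : finType) (V : {set T}) (e : rel T) x d z y :
  z \in ball V e x d -> e z y -> y \in V -> y \in ball V e x d.+1.
Proof.
move=> Hz ezy yV; rewrite ballS; apply/orP; right; rewrite yV /=.
by apply/existsP; exists z; rewrite Hz.
Qed.

Lemma gdist_le (T : finType) (V : {set T}) (e : rel T) x y d :
  y \in ball V e x d -> gdist V e x y <= d.
Proof.
move=> Hy; rewrite /gdist.
case: (ltnP d #|V|) => hd.
- rewrite leqNgt; apply/negP => lt.
  have := before_find 0 lt. by rewrite nth_iota // add0n Hy.
- apply: leq_trans (find_size _ _) _; by rewrite size_iota.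
Qed.

Lemma gdist_ge (T : finType) (V : {set T}) (e : rel T) x y m :
  m <= #|V| -> (forall d, d < m -> y \notin ball V e x d) -> m <= gdist V e x y.
Proof.
move=> hm H; rewrite /gdist leqNgt; apply/negP => lt.
have hs : has (fun d => y \in ball V e x d) (iota 0 #|V|).
  by rewrite has_find size_iota (leq_trans lt hm).
have := nth_find 0 hs.
rewrite nth_iota ?add0n; last by rewrite (leq_trans lt hm).
by move/negP: (H _ lt).
Qed.

Definition Fv n : {set elt n} := mkS predT (fun _ => true).
Definition Sv n (i : 'I_n) : {set elt n} := mkS (pred1 i) (fun _ => true).
Definition Zv n : {set elt n} := mkS (fun i : 'I_n => 0 < val i) (fun i => val i != 1).

Lemma V2_Fv n k : k < n -> V2 k (Fv n).
Proof.
move=> hkn; have h : n.-1 < n by lia.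
rewrite /V2; apply/andP; split.
- apply: (@phiB_mk _ _ _ (Ordinal h)) => // i _ /=; have := ltn_ord i; lia.
- apply/negP => /card_absv; rewrite absv_mk.
  have -> : [set i : 'I_n | predT i] = setT by apply/setP => i; rewrite !inE.
  rewrite cardsT card_ord; lia.
Qed.

Lemma V2_Sv n k (i : 'I_n) : 1 < k -> V2 k (Sv i).
Proof.
move=> hk; rewrite /V2; apply/andP; split.
- apply: (@phiB_mk _ _ _ i) => //=.
  by move=> j /eqP ->.
- apply/negP => /card_absv; rewrite absv_mk.
  have -> : [set j : 'I_n | pred1 i j] = [set i] by apply/setP => j; rewrite !inE.
  rewrite cards1; lia.
Qed.

Lemma V2_Zv n k : 2 < n -> V2 k (Zv n).
Proof.
move=> hn; have h : n.-1 < n by lia.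
have h1 : 1 < n by lia.
rewrite /V2; apply/andP; split.
- apply: (@phiB_mk _ _ _ (Ordinal h)) => /=; try lia.
  by move=> i _; have := ltn_ord i; lia.
- apply/negP => /andP[/forall_inP H _].
  by have := H (Ordinal h1, false); rewrite inE /= => /(_ isT).
Qed.

Lemma V2_notV1 n k (X : {set elt n}) : V2 k X -> V1 k X = false.
Proof. by case/andP => _ /negbTE. Qed.

Lemma HBadjC n k (X Y : {set elt n}) : HBadj k X Y = HBadj k Y X.
Proof. by rewrite /HBadj orbC. Qed.

Lemma adj_parts n k (X Y : {set elt n}) : HBadj k X Y -> (V1 k X && V2 k Y) || (V1 k Y && V2 k X).
Proof. by case/orP => /andP[-> _]; rewrite ?orbT. Qed.

Lemma adj_V1 n k (X Y : {set elt n}) : V1 k X -> HBadj k X Y ->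
  (absv X \subset absv Y) || (absv Y \subset absv X).
Proof.
move=> HX; have h : V2 k X = false by rewrite /V2 HX andbF.
by rewrite /HBadj h andbF orbF => /andP[_].
Qed.

Lemma noadj22 n k (X Y : {set elt n}) : V2 k X -> V2 k Y -> HBadj k X Y = false.
Proof.
move=> hX hY; apply/negP => /adj_parts.
by rewrite (V2_notV1 hX) (V2_notV1 hY).
Qed.

Lemma noadj11 n k (X Y : {set elt n}) : V1 k X -> V1 k Y -> HBadj k X Y = false.
Proof.
move=> hX hY; apply/negP => /adj_parts.
by rewrite /V2 hX hY !andbF.
Qed.

Lemma inV n k (X : {set elt n}) : (X \in HBvert n k) = V1 k X || V2 k X.
Proof. by rewrite inE. Qed.

Lemma V1_nbr n k (S : {set elt n}) : k <= n -> V2 k S ->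
  exists X, V1 k X && HBadj k X S.
Proof.
move=> hkn hS; have : k <= #|'I_n| by rewrite card_ord.
case/(exists_k (absv S)) => B /andP[/eqP hB hsub].
exists (mkV1 B); have h1 := V1_mkV1 hB; rewrite h1 /HBadj h1 hS absv_mkV1 hsub.
done.
Qed.

Lemma adj_F n k (X : {set elt n}) : k < n -> V1 k X -> HBadj k X (Fv n).
Proof.
move=> hkn hX; rewrite /HBadj; apply/orP; left; rewrite hX (V2_Fv hkn) /=.
by rewrite /Fv absv_mk; apply/orP; left; apply/subsetP => i; rewrite inE.
Qed.

Lemma near_V1 n k (x : {set elt n}) : k <= n -> x \in HBvert n k ->
  exists u, V1 k u && ((u == x) || HBadj k x u).
Proof.
move=> hkn; rewrite inV => /orP[h1 | h2]; first by exists x; rewrite h1 eqxx.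
case: (V1_nbr hkn h2) => X /andP[h1 h]; exists X; by rewrite h1 HBadjC h orbT.
Qed.

Lemma Fv_in n k : k < n -> Fv n \in HBvert n k.
Proof. by move=> h; rewrite inV V2_Fv ?orbT. Qed.

Lemma V1_in n k (X : {set elt n}) : V1 k X -> X \in HBvert n k.
Proof. by move=> h; rewrite inV h. Qed.

Lemma F_ball2 n k (x : {set elt n}) : k < n -> x \in HBvert n k ->
  Fv n \in ball (HBvert n k) (HBadj k) x 2.
Proof.
move=> hkn xV; case: (near_V1 (ltnW hkn) xV) => u /andP[hu /orP[/eqP ux | hxu]].
- apply: (ball_mono (d := 1)) => //; apply: (ball_step (z := x)); first exact: ball_refl.
  by rewrite -ux adj_F. exact: Fv_in.
- apply: (ball_step (z := u)); last exact: Fv_in.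
  + apply: (ball_step (z := x)) => //; first exact: ball_refl. exact: V1_in.
  + exact: adj_F.
Qed.

Lemma all_ball4 n k (x y : {set elt n}) : k < n -> x \in HBvert n k -> y \in HBvert n k ->
  y \in ball (HBvert n k) (HBadj k) x 4.
Proof.
move=> hkn xV yV; have hF := F_ball2 hkn xV.
case: (near_V1 (ltnW hkn) yV) => w /andP[hw hyw].
have w3 : w \in ball (HBvert n k) (HBadj k) x 3.
  by apply: (ball_step hF); [rewrite HBadjC adj_F | exact: V1_in].
case/orP: hyw => [/eqP <- | h]; first exact: (ball_mono (d := 3)).
by apply: (ball_step w3) => //; rewrite HBadjC.
Qed.

Lemma F_ecc n k (y : {set elt n}) : k < n -> y \in HBvert n k ->
  y \in ball (HBvert n k) (HBadj k) (Fv n) 2.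
Proof.
move=> hkn yV; case: (near_V1 (ltnW hkn) yV) => w /andP[hw hyw].
have w1 : w \in ball (HBvert n k) (HBadj k) (Fv n) 1.
  apply: (ball_step (z := Fv n)); first exact: ball_refl.
  by rewrite HBadjC adj_F. exact: V1_in.
case/orP: hyw => [/eqP <- | h]; first exact: (ball_mono (d := 1)).
by apply: (ball_step w1) => //; rewrite HBadjC.
Qed.

Lemma notin_ball1 (T : finType) (V : {set T}) (e : rel T) x y :
  y != x -> ~~ e x y -> y \notin ball V e x 1.
Proof.
move=> hyx hxy; rewrite ballS /= in_set1 (negbTE hyx) /=.
by apply/negP => /andP[_ /existsP[z /andP[/set1P -> h]]]; rewrite h in hxy.
Qed.

Lemma neq_by (T : finType) (a : T) (A B : {set T}) : (a \in A) != (a \in B) -> A != B.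
Proof. by apply: contraNneq => ->. Qed.

Lemma far2 n k (x : {set elt n}) : 2 < n -> 1 < k -> k < n -> x \in HBvert n k ->
  exists y, (y \in HBvert n k) && (y \notin ball (HBvert n k) (HBadj k) x 1).
Proof.
move=> hn hk hkn; rewrite inV => /orP[h1 | h2].
- have : ~~ (setT \subset absv x).
    apply/negP => /subset_leq_card; rewrite cardsT card_ord (card_absv h1); lia.
  case/subsetPn => i _ hi.
  exists (Sv i); rewrite inV V2_Sv ?orbT //=; apply: notin_ball1.
  + by apply/negP => /eqP he; move: h1; rewrite -he V2_notV1 // V2_Sv.
  + apply/negP => /(adj_V1 h1) /orP[hs | hs].
    * move/subset_leq_card: hs; rewrite /Sv absv_mk (card_absv h1).
      have -> : [set j : 'I_n | pred1 i j] = [set i] by apply/setP => j; rewrite !inE.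
      rewrite cards1; lia.
    * move/subsetP: hs => /(_ i); rewrite /Sv absv_mk.
      have hii : i \in [set j : 'I_n | pred1 i j] by rewrite inE /=.
      move=> /(_ hii) hh.
      by rewrite hh in hi.
- have h0 : 0 < n by lia. have h1 : 1 < n by lia.
  have hne : Sv (Ordinal h0) != Sv (Ordinal h1).
    by apply: (neq_by (a := (Ordinal h0, true))); rewrite !inE /=.
  have : exists y, [&& V2 k y, y != x & y \in [:: Sv (Ordinal h0); Sv (Ordinal h1)]].
    case: (eqVneq x (Sv (Ordinal h0))) => hx.
    + exists (Sv (Ordinal h1)); rewrite V2_Sv // hx eq_sym hne; by rewrite !inE eqxx orbT.
    + exists (Sv (Ordinal h0)); rewrite V2_Sv // eq_sym hx; by rewrite !inE eqxx.
  case=> y /and3P[hy hyx _]; exists y; rewrite inV hy orbT /=.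
  by apply: notin_ball1 => //; rewrite noadj22.
Qed.

Lemma common_no n k (i0 : 'I_n) (w : {set elt n}) : 1 < k -> k < n -> val i0 = 0 ->
  V1 k w -> HBadj k (Sv i0) w -> HBadj k w (Zv n) -> False.
Proof.
move=> hk hkn hi0 hw; rewrite HBadjC => /(adj_V1 hw) h1 /(adj_V1 hw) h2.
have hS : absv (Sv i0) = [set i0] by rewrite /Sv absv_mk; apply/setP => j; rewrite !inE.
have hZ : absv (Zv n) = [set j : 'I_n | 0 < val j] by rewrite /Zv absv_mk.
rewrite hS hZ in h1 h2.
case/orP: h1 => h1.
  by move/subset_leq_card: h1; rewrite cards1 (card_absv hw); lia.
have i0w : i0 \in absv w by move/subsetP: h1; apply; rewrite inE.
case/orP: h2 => h2.
  by move/subsetP: h2 => /(_ _ i0w); rewrite inE hi0.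
have : setT \subset absv w.
  apply/subsetP => j _; case: (posnP (val j)) => hj.
  + by have -> : j = i0 by apply/val_inj; rewrite /= hj hi0.
  + by move/subsetP: h2; apply; rewrite inE.
by move/subset_leq_card; rewrite cardsT card_ord (card_absv hw); lia.
Qed.

Lemma ball1_Y n k (Y z : {set elt n}) : V2 k Y -> z \in ball (HBvert n k) (HBadj k) Y 1 ->
  z = Y \/ (V1 k z && HBadj k Y z).
Proof.
move=> hY; rewrite ballS /= in_set1 => /orP[/eqP -> | /andP[_ /existsP[w /andP[/set1P wY h]]]].
  by left.
rewrite wY in h; right; rewrite h andbT; move/adj_parts: h; rewrite (V2_notV1 hY) /=.
by case/andP.
Qed.

Lemma ball2_Y n k (Y z : {set elt n}) : V2 k Y -> z \in ball (HBvert n k) (HBadj k) Y 2 ->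
  V1 k z -> HBadj k Y z.
Proof.
move=> hY; rewrite ballS => /orP[/(ball1_Y hY) [-> | /andP[_ //]] | ].
  by rewrite (V2_notV1 hY).
case/andP => _ /existsP[w /andP[/(ball1_Y hY) hw h]] hz.
case: hw => [wY | /andP[hw1 _]]; first by rewrite -wY.
by rewrite noadj11 in h.
Qed.

Lemma far4 n k (i0 : 'I_n) : 2 < n -> 1 < k -> k < n -> val i0 = 0 ->
  Zv n \notin ball (HBvert n k) (HBadj k) (Sv i0) 3.
Proof.
move=> hn hk hkn hi0; have hY := V2_Sv i0 hk; have hZ : V2 k (Zv n) := V2_Zv k hn.
apply/negP; rewrite ballS => /orP[].
- rewrite ballS => /orP[/(ball1_Y hY) [| /andP[]] | ].
  + move=> he.
    have : (i0, true) \in Zv n by rewrite he !inE /= !eqxx.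
    by rewrite !inE /= hi0.
  + by rewrite (V2_notV1 hZ).
  + case/andP => _ /existsP[w /andP[/(ball1_Y hY) hw h]].
    case: hw => [he | /andP[hw1 hw2]].
    * by rewrite he noadj22 in h.
    * exact: (common_no hk hkn hi0 hw1 hw2 h).
- case/andP => _ /existsP[z /andP[hz h]].
  have hz1 : V1 k z by case/orP: (adj_parts h) => /andP[] //; rewrite (V2_notV1 hZ).
  exact: (common_no hk hkn hi0 hz1 (ball2_Y hY hz hz1) h).
Qed.

Lemma bigmin_le_seq (T : eqType) (s : seq T) (P : pred T) (f : T -> nat) x0 j :
  j \in s -> P j -> \big[minn/x0]_(i <- s | P i) f i <= f j.
Proof.
move=> js Pj; elim: s js => [//|a s IH]; rewrite inE big_cons => /orP[/eqP <- | js].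
  by rewrite Pj geq_minl.
case: (P a); last exact: IH.
by apply: leq_trans (geq_minr _ _) (IH js).
Qed.

Lemma bigmin_le (T : finType) (V : {set T}) (f : T -> nat) x0 j :
  j \in V -> \big[minn/x0]_(i in V) f i <= f j.
Proof. by move=> jV; apply: bigmin_le_seq; rewrite ?mem_index_enum. Qed.

Lemma cardV n k : 2 < n -> 1 < k -> k < n -> 4 <= #|HBvert n k|.
Proof.
move=> hn hk hkn; have h0 : 0 < n by lia. have h1 : 1 < n by lia.
set i0 := Ordinal h0; set i1 := Ordinal h1.
have hu : uniq [:: Fv n; Sv i0; Zv n; Sv i1].
  have n01 : (i0 == i1) = false by apply/negP => /eqP /(congr1 val).
  have n10 : (i1 == i0) = false by apply/negP => /eqP /(congr1 val).
  rewrite /= !inE !negb_or.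
  have e1 : Fv n != Sv i0 by apply: (neq_by (a := (i1, true))); rewrite !inE /= ?n10 ?n01 ?eqxx.
  have e2 : Fv n != Zv n by apply: (neq_by (a := (i0, true))); rewrite !inE /=.
  have e3 : Fv n != Sv i1 by apply: (neq_by (a := (i0, true))); rewrite !inE /= ?n10 ?n01 ?eqxx.
  have e4 : Sv i0 != Zv n by apply: (neq_by (a := (i0, true))); rewrite !inE /= ?eqxx.
  have e5 : Sv i0 != Sv i1 by apply: (neq_by (a := (i0, true))); rewrite !inE /= ?n10 ?n01 ?eqxx.
  have e6 : Zv n != Sv i1 by apply: (neq_by (a := (i1, false))); rewrite !inE /= ?n10 ?n01 ?eqxx.
  by rewrite e1 e2 e3 e4 e5 e6.
move/card_uniqP: hu => /= <-.
apply: subset_leq_card; apply/subsetP => x; rewrite !inE.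
by case/or4P => /eqP ->; rewrite ?V2_Fv ?V2_Sv ?V2_Zv ?orbT.
Qed.

Theorem mainTheorem13 (n k : nat) (hn : 2 < n) (hk1 : 1 < k) (hkn : k < n) :
  [/\ gconnected (HBvert n k) (@HBadj n k),
      diam (HBvert n k) (@HBadj n k) = 4
    & rad (HBvert n k) (@HBadj n k) = 2].
Proof.
have hV := cardV hn hk1 hkn.
have h0 : 0 < n by lia.
set i0 := Ordinal h0.
have Y0V : Sv i0 \in HBvert n k by rewrite inV V2_Sv ?orbT.
have FV : Fv n \in HBvert n k by exact: Fv_in.
split.
- by move=> x y xV yV; exists 4; exact: all_ball4.
- apply/eqP; rewrite eqn_leq; apply/andP; split.
  + apply/bigmax_leqP => x xV; apply/bigmax_leqP => y yV.
    by apply: gdist_le; exact: all_ball4.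
  + apply: leq_trans (leq_bigmax_cond _ Y0V).
    have ZV : Zv n \in HBvert n k by rewrite inV V2_Zv ?orbT.
    apply: leq_trans (leq_bigmax_cond _ ZV).
    apply: gdist_ge => // d hd; apply/negP => /(ball_mono (d' := 3)) h.
    by move/negP: (far4 hn hk1 hkn (i0 := i0) erefl); apply; apply: h; lia.
- apply/eqP; rewrite eqn_leq; apply/andP; split.
  + rewrite /rad; apply: leq_trans (bigmin_le _ _ FV) _.
    by apply/bigmax_leqP => y yV; apply: gdist_le; exact: F_ecc.
  + apply: (big_ind (fun v => 2 <= v)) => //; first by lia.
      by move=> a b ha hb; rewrite leq_min ha hb.
    move=> x xV; case: (far2 hn hk1 hkn xV) => y /andP[yV hy].
    apply: leq_trans (leq_bigmax_cond _ yV).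
    apply: gdist_ge; first by lia.
    move=> d hd; apply/negP => /(ball_mono (d' := 1)) h.
    by move/negP: hy; apply; apply: h; lia.
Qed.
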